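(* Let $\Gamma=(K_n,\sigma)$ be a signed complete graph and let $\{X_1,\ldots,X_p,X_{p+1},\ldots,X_{p+q}\}$ be a partition of $V(\Gamma)$ into nonempty sets with $|X_i|=n_i$, such that: for every $i\ne j$ all edges between $X_i$ and $X_j$ have the same sign $\epsilon_{ij}\in\{+1,-1\}$; all edges inside $X_i$ are positive for $i=1,\ldots,p$; and all edges inside $X_i$ are negative for $i=p+1,\ldots,p+q$. Let $B=(b_{ij})$ be the $(p+q)\times(p+q)$ quotient matrix, i.e. $b_{ij}$ is the (constant) row sum of the submatrix of $A(\Gamma)$ with rows indexed by $X_i$ and columns by $X_j$ (so $b_{ii}=n_i-1$ for $i\le p$, $b_{ii}=-(n_i-1)$ for $i>p$, and $b_{ij}=\epsilon_{ij}n_j$ for $i\neq j$). If $m_1=\sum_{i=1}^p n_i$ and $m_2=\sum_{i=p+1}^{p+q}n_i$, then $$\varphi(\Gamma,\lambda)=(\lambda+1)^{m_1-p}(\lambda-1)^{m_2-q}\varphi(B,\lambda).$$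
   Context: A signed complete graph $(K_n,\sigma)$ assigns a sign $\pm$ to each edge of $K_n$; its adjacency matrix $A(\Gamma)$ has off-diagonal entries $\sigma(v_iv_j)\in\{1,-1\}$ and zero diagonal. $\varphi(M,\lambda)=\det(\lambda I-M)$ denotes the characteristic polynomial of a matrix $M$, and $\varphi(\Gamma,\lambda)=\varphi(A(\Gamma),\lambda)$. *)

(* Defs.v *)
From mathcomp Require Import all_boot all_order all_algebra.
Set Implicit Arguments. Unset Strict Implicit. Unset Printing Implicit Defensive.
Import GRing.Theory Num.Theory.
Local Open Scope ring_scope.

Definition signed_complete (n : nat) (sigma : 'I_n -> 'I_n -> int) : Prop :=
  forall i j : 'I_n, i != j -> sigma i j = sigma j i /\ (sigma i j = 1 \/ sigma i j = -1).

Definition sadj (n : nat) (sigma : 'I_n -> 'I_n -> int) : 'M[int]_n :=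
  \matrix_(i, j) (if i == j then 0 else sigma i j).

Definition phi (n : nat) (M : 'M[int]_n) : {poly int} := char_poly M.

(* Main.v *)
Require Import Defs.
From mathcomp Require Import all_boot all_order all_algebra.
From mathcomp Require Import ring.
Set Implicit Arguments. Unset Strict Implicit. Unset Printing Implicit Defensive.
Import GRing.Theory Num.Theory.
Local Open Scope ring_scope.
Lemma sylvester (R : comNzRingType) n m (X : 'M[R]_(n, m)) (Y : 'M[R]_(m, n)) :
  \det (1%:M + X *m Y) = \det (1%:M + Y *m X).
Proof.
have e1 : block_mx 1%:M 0 Y 1%:M *m block_mx 1%:M (- X) 0 (1%:M + Y *m X)
   = block_mx 1%:M (- X) Y 1%:M.
  rewrite mulmx_block ?mul1mx ?mulmx1 ?mul0mx ?mulmx0 ?addr0 ?add0r.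
  by rewrite mulmxN addrC -addrA addrN addr0.
have e2 : block_mx (1%:M + X *m Y) (- X) 0 1%:M *m block_mx 1%:M 0 Y 1%:M
   = block_mx 1%:M (- X) Y 1%:M.
  rewrite mulmx_block ?mul1mx ?mulmx1 ?mul0mx ?mulmx0 ?addr0 ?add0r.
  by rewrite mulNmx addrK.
have := congr1 determinant (etrans e1 (esym e2)).
rewrite !det_mulmx !det_ublock. rewrite (det_lblock (1%:M : 'M[R]_n)). by rewrite !det1 !mul1r !mulr1 => ->.
Qed.

Lemma sum_delta (R : nzRingType) (I : finType) (i : I) (F : I -> R) :
  \sum_a ((i == a)%:R * F a) = F i.
Proof.
rewrite (bigD1 i) //= eqxx mul1r big1 ?addr0 // => a /negbTE.
by rewrite eq_sym => ->; rewrite mul0r.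
Qed.

Lemma sum_delta' (R : nzRingType) (I : finType) (i : I) (F : I -> R) :
  \sum_a (F a * (i == a)%:R) = F i.
Proof.
rewrite (bigD1 i) //= eqxx mulr1 big1 ?addr0 // => a /negbTE.
by rewrite eq_sym => ->; rewrite mulr0.
Qed.

Lemma sum_deltan (R : nzRingType) (I : finType) (i : I) (c : R) (F : I -> R) :
  \sum_a ((c *+ (i == a)) * F a) = c * F i.
Proof.
rewrite (bigD1 i) //= eqxx mulr1n big1 ?addr0 // => a /negbTE.
by rewrite eq_sym => ->; rewrite mulr0n mul0r.
Qed.

Section Main.
Variables (K : fieldType) (n m : nat) (part : 'I_n -> 'I_m) (S : 'M[K]_m)
  (s : 'I_m -> K) (l : K).
Hypothesis hs : forall b, l + s b != 0.
Let nb b := #|[set x | part x == b]|.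
Let A := \matrix_(x, y) (S (part x) (part y) - (x == y)%:R * s (part x)).
Let Bm := \matrix_(a, b) (S a b * (nb b)%:R - (a == b)%:R * s a).
Let C : 'M[K]_(n, m) := \matrix_(x, a) ((part x == a)%:R).
Let L := diag_mx (\row_x (l + s (part x))).
Let Li := diag_mx (\row_x (l + s (part x))^-1).
Let Lb := diag_mx (\row_b (l + s b)).
Let D : 'M[K]_m := \matrix_(a, b) ((a == b)%:R * ((l + s a)^-1 *+ nb a)).

Lemma E1 : l%:M - A = L - C *m S *m C^T.
Proof.
apply/matrixP => x y; rewrite !mxE.
under eq_bigr => b _ do rewrite !mxE.
under eq_bigr => b _ do under eq_bigr => a _ do rewrite !mxE.
under eq_bigr => b _ do rewrite sum_delta.
rewrite sum_delta'.
case: eqP => [<-|_]; rewrite ?mulr1n ?mulr0n ?mul1r ?mul0r ?subr0; last by rewrite sub0r.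
ring.
Qed.

Lemma LLi : L *m Li = 1%:M.
Proof.
apply/matrixP => x y; rewrite mul_diag_mx !mxE.
case: eqP => [->|_]; rewrite ?mulr1n ?mulr0n ?mulr0 //.
by rewrite divff.
Qed.

Lemma E2 : L - C *m S *m C^T = L *m (1%:M + (Li *m C) *m (- (S *m C^T))).
Proof.
by rewrite mulmxDr mulmx1 !mulmxA LLi mul1mx mulmxN mulmxA.
Qed.

Lemma E3 : (S *m C^T) *m (Li *m C) = S *m D.
Proof.
rewrite -mulmxA; congr (_ *m _); apply/matrixP => a b; rewrite !mxE.
under eq_bigr => x _ do rewrite !mxE.
under eq_bigr => x _ do under eq_bigr => y _ do rewrite !mxE.
under eq_bigr => x _ do rewrite sum_deltan.
have -> : \sum_i ((part i == a)%:R * ((l + s (part i))^-1 * (part i == b)%:R))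
   = \sum_i (if i \in [set x | part x == a] then (a == b)%:R * (l + s a)^-1 else 0).
  apply: eq_bigr => i _; rewrite inE; case: eqP => [->|_]; last by rewrite mul0r.
  by rewrite mul1r mulrC.
rewrite -big_mkcond sumr_const /nb.
by case: (a == b); rewrite ?mul1r ?mul0r ?mul0rn.
Qed.

Lemma DLb : D *m Lb = \matrix_(a, b) ((a == b)%:R * (nb a)%:R).
Proof.
apply/matrixP => a b; rewrite mul_mx_diag !mxE.
case: eqP => [<-|_]; last by rewrite !mul0r.
by rewrite mulr1n !mul1r mulrnAl mulVf // -mulr_natr mul1r.
Qed.

Lemma E4 : (1%:M - S *m D) *m Lb = l%:M - Bm.
Proof.
rewrite mulmxBl mul1mx -mulmxA DLb.
apply/matrixP => a b; rewrite !mxE.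
under eq_bigr => c _ do rewrite !mxE.
rewrite (eq_bigr (fun c => S a c * (nb b)%:R * (b == c)%:R)); last first.
  move=> c _; case: (eqVneq c b) => [->|h]; rewrite ?eqxx /= ?mul1r ?mulr1 ?mul0r ?mulr0 //.
rewrite (sum_delta' b (fun c => S a c * (nb b)%:R)).
case: eqP => [<-|_]; rewrite ?mulr1n ?mulr0n ?mul1r ?mul0r; ring.
Qed.

Lemma mainK : \det (l%:M - A) * \prod_b (l + s b) = \prod_x (l + s (part x)) * \det (l%:M - Bm).
Proof.
rewrite E1 E2 det_mulmx sylvester.
rewrite mulNmx E3 -E4 det_mulmx -mulrA. rewrite /Lb /L !det_diag.
under eq_bigr => x _ do rewrite mxE.
by under [X in _ = _ * (_ * X)]eq_bigr => x _ do rewrite mxE.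
Qed.

End Main.

Local Notation KK := {fraction {poly int}}.

Lemma tofracC (z : int) : tofrac (z%:P) = z%:~R :> KK.
Proof.
by rewrite -[z in z%:P]intz (rmorph_int (@polyC int)) (rmorph_int (@tofrac _)).
Qed.

Lemma charK k (M : 'M[int]_k) :
  tofrac (char_poly M) = \det ((tofrac 'X)%:M - map_mx (fun z : int => z%:~R : KK) M).
Proof.
rewrite /char_poly -det_map_mx; congr (\det _); apply/matrixP => i j.
by rewrite !mxE rmorphB /= rmorphMn /= tofracC.
Qed.

Lemma sum_pos_sub k (g : 'I_k -> nat) : (forall i, 0 < g i)%N ->
  (\sum_i (g i - 1) = \sum_i g i - k)%N.
Proof.
move=> hg; apply/eqP; rewrite -(eqn_add2r k) subnK.
  rewrite -[k in (_ + k)%N]card_ord -sum1_card -big_split /=.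
  by apply/eqP; apply: eq_bigr => i _; rewrite subnK.
rewrite -[k in (k <= _)%N]card_ord -sum1_card; apply: leq_sum => i _; exact: hg.
Qed.

Lemma Xpm_neq0 (c : int) : (c = 1 \/ c = -1) -> tofrac 'X + c%:~R != 0 :> KK.
Proof.
move=> hc; rewrite -tofracC -rmorphD tofrac_eq0.
apply/eqP => /(congr1 (fun r : {poly int} => size r)).
rewrite size_XaddC size_poly0 //.
Qed.

Unset Implicit Arguments.

Theorem theorem3p2 (n p q : nat) (sigma : 'I_n -> 'I_n -> int)
  (part : 'I_n -> 'I_(p + q))
  (eps : 'I_(p + q) -> 'I_(p + q) -> int)
  (B : 'M[int]_(p + q)) :
  signed_complete sigma ->
  (forall a : 'I_(p + q), exists x : 'I_n, part x = a) ->
  (forall a b : 'I_(p + q), a != b -> eps a b = 1 \/ eps a b = -1) ->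
  (forall x y : 'I_n, part x != part y -> sigma x y = eps (part x) (part y)) ->
  (forall x y : 'I_n, x != y -> part x = part y -> (val (part x) < p)%N -> sigma x y = 1) ->
  (forall x y : 'I_n, x != y -> part x = part y -> (p <= val (part x))%N -> sigma x y = -1) ->
  (forall (a b : 'I_(p + q)) (x : 'I_n), part x = a ->
      B a b = \sum_(j < n | part j == b) sadj sigma x j) ->
  let size_part := fun a : 'I_(p + q) => #|[set x | part x == a]| in
  let m1 := (\sum_(a < p + q | (val a < p)%N) size_part a)%N in
  let m2 := (\sum_(a < p + q | (p <= val a)%N) size_part a)%N in
  phi (sadj sigma) =
    ('X + 1) ^+ (m1 - p) * ('X - 1) ^+ (m2 - q) * phi B.
Proof.
move=> hsc hne heps hdiff hpos hneg hB size_part m1 m2.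
pose si (a : 'I_(p + q)) : int := if (val a < p)%N then 1 else -1.
pose Si : 'M[int]_(p + q) := \matrix_(a, b) (if a == b then si a else eps a b).
have hA : sadj sigma = \matrix_(x, y) (Si (part x) (part y) - (x == y)%:R * si (part x)).
  apply/matrixP => x y; rewrite !mxE.
  case: (eqVneq x y) => [->|hxy]; first by rewrite eqxx mul1r subrr.
  rewrite mul0r subr0.
  case: (eqVneq (part x) (part y)) => [he|hd]; last by rewrite hdiff.
  rewrite /si; case: ltnP => h.
    by rewrite hpos.
  by rewrite hneg.
have hBm : B = \matrix_(a, b) (Si a b * (size_part b)%:R - (a == b)%:R * si a).
  apply/matrixP => a b; rewrite mxE; have [x hx] := hne a.
  rewrite (hB a b x hx) hA.
  under eq_bigr => j _ do rewrite mxE hx.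
  rewrite sumrB.
  congr (_ - _).
    rewrite (eq_bigl (fun j => j \in [set x | part x == b])); last by move=> j; rewrite inE.
    rewrite (eq_bigr (fun=> Si a b)); last by move=> j; rewrite inE => /eqP ->.
    by rewrite sumr_const mulr_natr.
  rewrite big_mkcond /=.
  rewrite (eq_bigr (fun j => (x == j)%:R * ((part j == b)%:R * si a))); last first.
    by move=> j _; case: (part j == b); case: (x == j); rewrite /= ?mul1r ?mul0r ?mulr0 ?mulr1.
  rewrite sum_delta hx; by case: (a == b); rewrite /= ?mul1r ?mul0r.
have hsz : forall a, (0 < size_part a)%N.
  move=> a; have [x hx] := hne a; apply/card_gt0P; exists x; by rewrite inE hx.
have hsi : forall a, si a = 1 \/ si a = -1.
  by move=> a; rewrite /si; case: ifP; [left|right].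
have hl : forall i : 'I_p, si (lshift q i) = 1 by move=> i; rewrite /si /= ltn_ord.
have hr : forall i : 'I_q, si (rshift p i) = -1.
  by move=> i; rewrite /si /= ltnNge leq_addr.
apply/eqP; rewrite -tofrac_eq; apply/eqP.
rewrite /phi !rmorphM /= !rmorphXn /= rmorphD rmorphB /= rmorph1 !charK.
set x := tofrac 'X.
pose sk a : KK := (si a)%:~R.
pose Sk := map_mx (fun z : int => z%:~R : KK) Si.
have eA : map_mx (fun z : int => z%:~R : KK) (sadj sigma) =
    \matrix_(i, j) (Sk (part i) (part j) - (i == j)%:R * sk (part i)).
  by rewrite hA; apply/matrixP => i j; rewrite !mxE intrB intrM mulrz_nat.
have eB : map_mx (fun z : int => z%:~R : KK) B =
    \matrix_(a, b) (Sk a b * (size_part b)%:R - (a == b)%:R * sk a).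
  by rewrite hBm; apply/matrixP => i j; rewrite !mxE intrB !intrM !mulrz_nat.
have hs : forall b, x + sk b != 0 by move=> b; apply: Xpm_neq0.
have M := @mainK _ _ _ part Sk sk x hs.
rewrite eA eB.
have hprod : \prod_i (x + sk (part i)) =
   (\prod_b (x + sk b) ^+ (size_part b - 1)) * \prod_b (x + sk b).
  rewrite -big_split /= (partition_big part xpredT) //=.
  apply: eq_bigr => b _.
  rewrite (eq_big (fun i => i \in [set y | part y == b]) (fun=> x + sk b)).
  - by rewrite prodr_const -exprSr subn1 prednK.
  - by move=> i; rewrite inE.
  - by move=> i /eqP ->.
have hprod2 : \prod_b (x + sk b) ^+ (size_part b - 1) =
    (x + 1) ^+ (m1 - p) * (x - 1) ^+ (m2 - q).
  rewrite big_split_ord /=.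
  under eq_bigr => i _ do rewrite /sk hl.
  under [X in _ * X]eq_bigr => i _ do rewrite /sk hr.
  rewrite !prodrXr; congr (_ ^+ _ * _ ^+ _).
    rewrite /m1 big_split_ord /=.
    rewrite [X in (X + _)%N](eq_bigl xpredT); last by move=> i; rewrite /= ltn_ord.
    rewrite [X in (_ + X)%N]big_pred0; last by move=> i; rewrite /= ltnNge leq_addr.
    by rewrite addn0 sum_pos_sub.
  rewrite /m2 big_split_ord /=.
  rewrite [X in (X + _)%N]big_pred0; last by move=> i; rewrite /= leqNgt ltn_ord.
  rewrite [X in (_ + X)%N](eq_bigl xpredT); last by move=> i; rewrite /= leq_addr.
  by rewrite add0n sum_pos_sub.
have hP : \prod_b (x + sk b) != 0 by apply/prodf_neq0 => b _; exact: hs.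
apply: (mulIf hP).
rewrite M hprod hprod2 /size_part; ring.
Qed.
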